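(* Let $X$ be a separable $\mathbb{R}$-rigid space with $|X|\ge 2$ and $G$ an infinite Abelian group. Then every Korovin orbit $G_f$ in $X^G$ is $\mathbb{R}$-rigid.
   Context: $X^G$ carries the product topology. For $f\in X^G$ and $g\in G$ let $gf\in X^G$ be given by $(gf)(x)=f(xg)$, and let $G_f=\{gf:g\in G\}\subseteq X^G$ with the subspace topology. The map $f\colon G\to X$ is a Korovin mapping if $\pi_M(G_f)=X^M$ for every countable $M\subseteq G$, where $\pi_M\colon X^G\to X^M$ is the projection; in that case $G_f$ is called a Korovin orbit. A space is $\mathbb{R}$-rigid if every continuous real-valued function on it is constant. *)

(* Defs.v *)
From HB Require Import structures.
From mathcomp Require Import all_boot all_order all_algebra.
From mathcomp Require Import all_classical all_reals all_analysis.
Set Implicit Arguments. Unset Strict Implicit. Unset Printing Implicit Defensive.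
Import Order.TTheory GRing.Theory Num.Theory.
Import numFieldNormedType.Exports.
Local Open Scope classical_set_scope.
Local Open Scope ring_scope.

Definition separable_space (T : topologicalType) : Prop :=
  exists D : set T, countable D /\ dense D.

Definition R_rigid (R : realType) (T : topologicalType) : Prop :=
  forall h : T -> R, continuous h -> forall a b : T, h a = h b.

Definition R_rigid_subset (R : realType) (T : topologicalType) (A : set T) : Prop :=
  forall h : T -> R, {within A, continuous h} ->
    forall a b : T, A a -> A b -> h a = h b.

(* The shift  (g f)(x) = f (x g), written additively for an abelian group. *)
Definition gshift (G : zmodType) (X : Type) (f : G -> X) (g : G) : G -> X :=
  fun x => f (x + g).

Definition orbit_set (G : zmodType) (X : topologicalType) (f : G -> X)
  : set {ptws G -> X} := range (gshift f).

(* Korovin mapping: pi_M(G_f) = X^M for every countable M subset of G,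
   i.e. every function M -> X is the restriction to M of some g f. *)
Definition Korovin_mapping (G : zmodType) (X : Type) (f : G -> X) : Prop :=
  forall M : set G, countable M ->
    forall h : G -> X, exists g : G, forall x, M x -> gshift f g x = h x.

(* Main.v *)
Require Import Defs.
From HB Require Import structures.
From mathcomp Require Import all_boot all_order all_algebra.
From mathcomp Require Import all_classical all_reals all_analysis.
From mathcomp Require Import lra.
Set Implicit Arguments. Unset Strict Implicit. Unset Printing Implicit Defensive.
Import Order.TTheory GRing.Theory Num.Theory.
Import numFieldNormedType.Exports.
Local Open Scope classical_set_scope.
Local Open Scope ring_scope.

Definition boxfil (G : eqType) (X : topologicalType) (c : G -> X) : set_system (G -> X) :=
  fun S => exists (L : seq G) (U : G -> set X),
    (forall i, open (U i) /\ U i (c i)) /\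
    (forall e, (forall i, i \in L -> U i (e i)) -> S e).

Lemma boxfil_filter (G : eqType) (X : topologicalType) (c : G -> X) : Filter (boxfil c).
Proof.
constructor.
- exists [::], (fun _ => setT); split => // i; split => //; exact: openT.
- move=> P Q [L1 [U1 [H1 S1]]] [L2 [U2 [H2 S2]]].
  exists (L1 ++ L2), (fun i => U1 i `&` U2 i); split.
    move=> i; have [Ho1 Hu1] := H1 i; have [Ho2 Hu2] := H2 i; split; first exact: openI.
    by split.
  move=> e He; split.
    by apply: S1 => i iL; case: (He i _) => //; rewrite mem_cat iL.
  by apply: S2 => i iL; case: (He i _) => //; rewrite mem_cat iL orbT.
- move=> P Q PQ [L [U [H S]]]; exists L, U; split => // e He; exact/PQ/S.
Qed.

Lemma nbhs_box (G : eqType) (X : topologicalType) (c : {ptws G -> X}) (S : set {ptws G -> X}) :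
  nbhs c S -> boxfil (c : G -> X) S.
Proof.
have Fb := boxfil_filter (c : G -> X).
suff : (boxfil (c : G -> X)) --> c by move=> /(_ S).
apply/cvg_sup => i.
move=> N /=.
rewrite (@nbhsE (initial_topology (fun f : G -> X => f i))) => -[B [Bop Bc] BN].
case: Bop => V oV VB.
have Vc : V (c i) by rewrite -VB in Bc.
change (boxfil c N).
exists [:: i], (fun j => if j == i then V else setT); split.
  move=> j; case: eqP => [->|_]; split => //; exact: openT.
move=> e He; apply: BN; rewrite -VB /=.
by have := He i; rewrite mem_head eqxx; apply.
Qed.

Lemma within_near (R : realType) (T : topologicalType) (A : set T) (h : T -> R) :
  {within A, continuous h} -> forall c, A c -> forall eps : R, 0 < eps ->
  nbhs c (fun t => A t -> `|h c - h t| < eps).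
Proof.
move=> hc c Ac eps e0.
have := (proj1 (subspace_continuousP _ _) hc) c Ac.
by move=> /cvgr_dist_lt /(_ eps e0).
Qed.

Lemma box_of_within (R : realType) (X : topologicalType) (G : eqType)
  (A : set {ptws G -> X}) (h : {ptws G -> X} -> R) :
  {within A, continuous h} -> forall c : {ptws G -> X}, A c -> forall eps : R, 0 < eps ->
  exists (L : seq G) (U : G -> set X), (forall i, open (U i) /\ U i (c i)) /\
    forall e : {ptws G -> X}, A e -> (forall i, i \in L -> U i (e i)) -> `|h c - h e| < eps.
Proof.
move=> hc c Ac eps e0.
have Hn := within_near hc Ac e0.
have [L [U [HU HS]]] := nbhs_box Hn.
exists L, U; split => // e Ae He; exact: HS.
Qed.

Lemma eq_of_close (R : realType) (x y : R) :
  (forall eps : R, 0 < eps -> `|x - y| < eps) -> x = y.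
Proof.
move=> H; apply/eqP; apply/negPn/negP => neq.
have xp : 0 < `|x - y| by rewrite normr_gt0 subr_eq0.
by have := H _ xp; rewrite ltxx.
Qed.

Lemma eq_of_close_nat (R : realType) (x y : R) :
  (forall k : nat, `|x - y| < (k.+1%:R)^-1 *+ 5) -> x = y.
Proof.
move=> H; apply: eq_of_close => eps e0.
have b0 : 0 <= 5 / eps by rewrite divr_ge0 // ltW.
have hb := archi_boundP b0.
set b := Num.bound _ in hb.
apply: (lt_le_trans (H b)).
have Kp : 0 < (b.+1%:R : R) by rewrite ltr0n.
rewrite -[X in X <= _]mulr_natr mulrC ler_pdivrMr //.
rewrite ltr_pdivrMr // in hb.
have : (b%:R : R) <= b.+1%:R by rewrite ler_nat.
move=> hbb.
have : b%:R * eps <= b.+1%:R * eps by rewrite ler_pM2r.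
move=> hh.
rewrite mulrC; lra.
Qed.

Lemma countableU2 T (A B : set T) : countable A -> countable B -> countable (A `|` B).
Proof.
move=> cA cB.
have -> : A `|` B = \bigcup_(b in [set: bool]) (if b then A else B).
  rewrite eqEsubset; split => x.
    by case=> Hx; [exists true|exists false].
  by case=> -[] _ Hx; [left|right].
by apply: bigcup_countable => // -[].
Qed.

Definition Iidx := (seq (nat * nat) * int * nat)%type.

Definition suppf (R : realType) (G : zmodType) (X : Type) (d : nat -> X)
  (bF : ((G -> X) * R) -> seq G * (G -> set X))
  (wit : (seq (G * X) * R * R) -> (G -> X)) (e : nat -> G) (idx : Iidx) : seq G :=
  let: (ps, z, k) := idx in
  let u := (k.+1%:R : R)^-1 in
  (bF (wit ([seq (e pr.1, d pr.2) | pr <- ps], z%:~R * u, u *+ 2), u)).1.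

Fixpoint Enum (R : realType) (G : zmodType) (X : Type) (d : nat -> X)
  (bF : ((G -> X) * R) -> seq G * (G -> set X))
  (wit : (seq (G * X) * R * R) -> (G -> X)) (n : nat) : nat -> G :=
  match n with
  | 0 => fun _ => 0
  | n'.+1 => fun m => if odd m then
       match (unpickle m./2 : option (Iidx * nat)) with
       | Some (idx, p) => nth 0 (suppf d bF wit (Enum d bF wit n') idx) p
       | None => 0 end
     else Enum d bF wit n' m./2
  end.

Lemma Enum_lift (R : realType) (G : zmodType) (X : Type) (d : nat -> X) bF wit n k j :
  @Enum R G X d bF wit (n + k) (j * 2 ^ k) = Enum d bF wit n j.
Proof.
elim: k => [|k IH]; first by rewrite addn0 expn0 muln1.
rewrite addnS /= expnS mulnCA mul2n odd_double doubleK. exact: IH.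
Qed.

Lemma Enum_new (R : realType) (G : zmodType) (X : Type) (d : nat -> X) bF wit n idx p :
  @Enum R G X d bF wit n.+1 (pickle (idx, p)).*2.+1 = nth 0 (suppf d bF wit (Enum d bF wit n) idx) p.
Proof.
by rewrite /= odd_double /= uphalf_double pickleK.
Qed.

Definition matchP (G : eqType) (X : eqType) (P : seq (G * X)) (c : G -> X) : Prop :=
  forall pr, pr \in P -> c pr.1 = pr.2.

Lemma abstract_rigid (R : realType) (X : topologicalType) (G : zmodType)
  (A : set (G -> X)) (h : (G -> X) -> R)
  (rigX : R_rigid R X)
  (d : nat -> X) (dD : forall W : set X, open W -> W !=set0 -> exists j, W (d j))
  (korA : forall M : set G, countable M -> forall p : G -> X,
     exists e, A e /\ forall x, M x -> e x = p x)
  (box : forall c, A c -> forall eps : R, 0 < eps ->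
     exists (L : seq G) (U : G -> set X), (forall i, open (U i) /\ U i (c i)) /\
       forall e, A e -> (forall i, i \in L -> U i (e i)) -> `|h c - h e| < eps) :
  forall a b, A a -> A b -> h a = h b.
Proof.
have [bF bFP] : {bF : ((G -> X) * R) -> seq G * (G -> set X) &
   forall p, A p.1 -> 0 < p.2 ->
     (forall i, open ((bF p).2 i) /\ (bF p).2 i (p.1 i)) /\
     forall e, A e -> (forall i, i \in (bF p).1 -> (bF p).2 i (e i)) -> `|h p.1 - h e| < p.2}.
  apply: (@choice _ _ (fun p (bp : seq G * (G -> set X)) => A p.1 -> 0 < p.2 ->
     (forall i, open (bp.2 i) /\ bp.2 i (p.1 i)) /\
     forall e, A e -> (forall i, i \in bp.1 -> bp.2 i (e i)) -> `|h p.1 - h e| < p.2)).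
  move=> -[c eps].
  case: (pselect (A c /\ 0 < eps)) => [[Ac e0]|nAc].
    by have [L [U HH]] := box c Ac eps e0; exists (L, U).
  by exists ([::], fun _ => setT) => Ac e0; exfalso; apply: nAc.
have [wit witP] : {wit : (seq (G * X) * R * R) -> (G -> X) &
   forall t, (exists c, A c /\ matchP t.1.1 c /\ `|h c - t.1.2| < t.2) ->
     A (wit t) /\ matchP t.1.1 (wit t) /\ `|h (wit t) - t.1.2| < t.2}.
  apply: (@choice _ _ (fun t (w : G -> X) => (exists c, A c /\ matchP t.1.1 c /\ `|h c - t.1.2| < t.2) ->
     A w /\ matchP t.1.1 w /\ `|h w - t.1.2| < t.2)) => t.
  case: (pselect (exists c, A c /\ matchP t.1.1 c /\ `|h c - t.1.2| < t.2)) => [[c Hc]|nH].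
    by exists c.
  by exists (fun _ => d 0%N) => H; exfalso; apply: nH.
pose E := Enum d bF wit.
pose M : set G := fun g => exists n j, E n j = g.
have cM : countable M.
  apply: (sub_countable _ (countableP [set: nat * nat])).
  apply: card_le_trans (card_image_le (fun p : nat * nat => E p.1 p.2) setT).
  apply: subset_card_le => g [n [j <-]]; by exists (n, j).
have suppM : forall n idx x, x \in suppf d bF wit (E n) idx -> M x.
  move=> n idx x xin; exists n.+1, (pickle (idx, index x (suppf d bF wit (E n) idx))).*2.+1.
  by rewrite /E Enum_new nth_index.
have patt : forall (L : seq G) (q : G -> X),
    (forall i, i \in L -> M i /\ exists jd, d jd = q i) ->
    exists n ps, [seq (E n pr.1, d pr.2) | pr <- ps] = [seq (i, q i) | i <- L].
  move=> L q; elim: L => [|i L IH] HL; first by exists 0%N, [::].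
  have [|n1 [ps1 Hps1]] := IH.
    by move=> j jL; apply: HL; rewrite in_cons jL orbT.
  have [[n2 [j2 Hj2]] [jd Hjd]] := HL i (mem_head _ _).
  exists (n1 + n2)%N, (((j2 * 2 ^ n1)%N, jd) :: [seq ((pr.1 * 2 ^ n2)%N, pr.2) | pr <- ps1]).
  rewrite /= -map_comp /= -Hps1 /E addnC Enum_lift -/E Hj2 Hjd; congr (_ :: _).
  by apply: eq_map => pr /=; rewrite /E addnC Enum_lift.
have P_ok : forall c c', A c -> A c' -> (forall x, M x -> c x = c' x) -> h c = h c'.
  move=> c c' Ac Ac' Hcc; apply: eq_of_close_nat => k.
  set K : R := k.+1%:R.
  have K0 : 0 < K by rewrite ltr0n.
  set u := K^-1.
  have u0 : 0 < u by rewrite invr_gt0.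
  have [[HU1 HS1] [HU2 HS2]] := (bFP (c, u) Ac u0, bFP (c', u) Ac' u0).
  rewrite /= in HU1 HS1 HU2 HS2.
  set L1 := (bF (c, u)).1 in HS1; set U1 := (bF (c, u)).2 in HU1 HS1.
  set L2 := (bF (c', u)).1 in HS2; set U2 := (bF (c', u)).2 in HU2 HS2.
  have [q qP] : {q : G -> X & forall i, M i -> U1 i (q i) /\ U2 i (q i) /\ exists jd, d jd = q i}.
    apply: (@choice _ _ (fun i (y : X) => M i -> U1 i y /\ U2 i y /\ exists jd, d jd = y)) => i.
    case: (pselect (M i)) => [Mi|nMi]; last by exists (c i).
    have [|j [Wj1 Wj2]] := dD (U1 i `&` U2 i) (openI (HU1 i).1 (HU2 i).1).
      by exists (c i); split; [exact: (HU1 i).2 | rewrite Hcc //; exact: (HU2 i).2].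
    by exists (d j) => _; split => //; split => //; exists j.
  set F0 := [seq i <- L1 ++ L2 | `[< M i >]].
  have F0M : forall i, i \in F0 -> M i /\ i \in L1 ++ L2.
    by move=> i; rewrite mem_filter => /andP[/asboolP ? ?].
  have [n [ps Hps]] := patt F0 q (fun i iF => conj (F0M i iF).1 (qP i (F0M i iF).1).2.2).
  set P := [seq (E n pr.1, d pr.2) | pr <- ps] in Hps.
  set z := Num.floor (h c * K).
  set r : R := z%:~R * u.
  have Hr : `|h c - r| < u.
    have h1 := floor_le (h c * K); have h2 := floorD1_gt (h c * K).
    rewrite -/z in h1 h2; rewrite intrD in h2.
    have -> : h c - r = (h c * K - z%:~R) * u.
      by rewrite /r /u mulrBl -mulrA mulfV ?mulr1 // gt_eqF.
    rewrite normrM (gtr0_norm u0) -[X in _ < X]mul1r ltr_pM2r //.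
    rewrite ltr_norml; apply/andP; split; lra.
  have cL12 : countable [set` (L1 ++ L2)] by apply: finite_set_countable; exact: finite_seq.
  have [e1 [Ae1 He1]] := korA _ cL12 (fun i => if `[< M i >] then q i else c i).
  have h1 : `|h c - h e1| < u.
    apply: HS1 => // i iL1; rewrite He1 /=; last by rewrite mem_cat iL1.
    case: asboolP => Mi; [exact: (qP i Mi).1 | exact: (HU1 i).2].
  have m1 : matchP P e1.
    move=> pr; rewrite Hps => /mapP [i iF ->] /=.
    have [Mi iL] := F0M i iF.
    by rewrite He1 //=; case: asboolP.
  have wex : exists c0, A c0 /\ matchP P c0 /\ `|h c0 - r| < u *+ 2.
    exists e1; split => //; split => //.
    move: Hr h1; rewrite !ltr_norml => /andP[? ?] /andP[? ?].
    apply/andP; split; lra.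
  have [Acs [mcs hcs]] := witP (P, r, u *+ 2) wex.
  rewrite /= in Acs mcs hcs.
  set cs := wit (P, r, u *+ 2) in Acs mcs hcs.
  have [HUs HSs] := bFP (cs, u) Acs u0.
  rewrite /= in HUs HSs.
  set Ls := (bF (cs, u)).1 in HSs; set Us := (bF (cs, u)).2 in HUs HSs.
  have LsM : forall x, x \in Ls -> M x := fun x hx => suppM n (ps, z, k) x hx.
  have cLs2 : countable [set` (Ls ++ L2)] by apply: finite_set_countable; exact: finite_seq.
  have [e3 [Ae3 He3]] := korA _ cLs2 (fun i => if i \in Ls then cs i else c' i).
  have h3a : `|h cs - h e3| < u.
    apply: HSs => // i iLs; rewrite He3 /=; last by rewrite mem_cat iLs.
    by rewrite iLs; exact: (HUs i).2.
  have h3b : `|h c' - h e3| < u.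
    apply: HS2 => // i iL2; rewrite He3 /=; last by rewrite mem_cat iL2 orbT.
    case: ifP => iLs; last exact: (HU2 i).2.
    have Mi := LsM i iLs.
    have iF : i \in F0 by rewrite mem_filter mem_cat iL2 orbT andbT; apply/asboolP.
    have -> : cs i = q i.
      by apply: (mcs (i, q i)); rewrite Hps; apply/mapP; exists i.
    exact: (qP i Mi).2.1.
  move: Hr hcs h3a h3b; rewrite !ltr_norml => /andP[? ?] /andP[? ?] /andP[? ?] /andP[? ?].
  rewrite -mulr_natr; apply/andP; split; lra.
have SC : forall c c' i, A c -> A c' -> (forall x, M x -> x <> i -> c x = c' x) -> h c = h c'.
  move=> c c' i Ac Ac' Hcc.
  pose pt (x0 : X) := fun y => if y == i then x0 else c y.
  pose M' := M `|` [set i].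
  have cM' : countable M' by apply: countableU2 => //; exact: countable1.
  have [sg sgP] : {sg : X -> (G -> X) & forall x0, A (sg x0) /\ forall y, M' y -> sg x0 y = pt x0 y}.
    apply: (@choice _ _ (fun x0 (w : G -> X) => A w /\ forall y, M' y -> w y = pt x0 y)) => x0.
    exact: korA.
  pose phi := fun x => h (sg x).
  have E1 : phi (c i) = h c.
    symmetry; apply: P_ok => //; first exact: (sgP _).1.
    move=> x Mx; rewrite (sgP _).2; last by left.
    by rewrite /pt; case: eqP => [->|].
  have E2 : phi (c' i) = h c'.
    apply: P_ok => //; first exact: (sgP _).1.
    move=> x Mx; rewrite (sgP _).2; last by left.
    by rewrite /pt; case: eqP => [->|ne] //; apply: Hcc.
  have cphi : continuous phi.
    move=> x0; apply/cvgrPdist_lt => eps e0.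
    have [As Hs] := sgP x0.
    have [L [U [HU HS]]] := box _ As eps e0.
    have Ui : U i x0.
      by have := (HU i).2; rewrite Hs; [rewrite /pt eqxx | right].
    apply: (@filterS _ _ _ (U i)); last first.
      by apply: open_nbhs_nbhs; split => //; exact: (HU i).1.
    move=> x Ux.
    have cML : countable (M' `|` [set` L]).
      by apply: countableU2 => //; apply: finite_set_countable; exact: finite_seq.
    have [e [Ae He]] := korA _ cML (fun y => if `[< M' y >] then pt x y else sg x0 y).
    have -> : phi x = h e.
      apply: P_ok => //; first exact: (sgP x).1.
      move=> y My; rewrite He; last by left; left.
      rewrite (sgP x).2; last by left.
      by case: asboolP => // -[]; left.
    apply: HS => // y yL; rewrite He; last by right.
    case: asboolP => My; last exact: (HU y).2.
    rewrite /pt; case: eqP => [->|ne] //.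
    by have := (HU y).2; rewrite Hs // /pt; case: eqP => // /ne.
  by rewrite -E1 -E2; apply: rigX.
have LL : forall (L : seq G) c c', A c -> A c' ->
    (forall x, M x -> x \notin L -> c x = c' x) -> h c = h c'.
  elim => [|i L IH] c c' Ac Ac' Hcc.
    by apply: P_ok => // x Mx; apply: Hcc.
  have [c2 [Ac2 Hc2]] := korA _ cM (fun y => if y == i then c y else c' y).
  transitivity (h c2).
    apply: IH => // x Mx xL; rewrite Hc2 //; case: eqP => // ne.
    by apply: Hcc => //; rewrite in_cons negb_or xL andbT; apply/eqP.
  apply: (SC c2 c' i Ac2 Ac') => x Mx ne; rewrite Hc2 //.
  by case: eqP.
move=> a b Aa Ab; symmetry; apply: eq_of_close => eps e0.
have [L [U [HU HS]]] := box _ Ab eps e0.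
have cML : countable (M `|` [set` L]).
  by apply: countableU2 => //; apply: finite_set_countable; exact: finite_seq.
have [e [Ae He]] := korA _ cML (fun y => if y \in L then b y else a y).
have -> : h a = h e.
  apply: LL (L) _ _ Aa Ae _ => x Mx xL.
  by rewrite He; [rewrite (negbTE xL) | left].
apply: HS => // i iL; rewrite He; last by right.
by rewrite iL; exact: (HU i).2.
Qed.


Unset Implicit Arguments.

Theorem corollary4p8 (R : realType) (X : topologicalType) (G : zmodType)
  (sepX : separable_space X) (rigX : R_rigid R X)
  (twoX : exists x y : X, x <> y)
  (infG : ~ finite_set [set: G])
  (f : G -> X) (korf : Korovin_mapping f) :
  R_rigid_subset R (orbit_set f).
Proof.
move=> h hc.
have [x0 _] : exists x : X, True by case: twoX => x _; exists x.
have [D [cD dD]] := sepX.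
have [fi fiI] := countable_injP _ cD.
have [d dP] : {d : nat -> X & forall n, (exists y, D y /\ fi y = n) -> D (d n) /\ fi (d n) = n}.
  apply: (@choice _ _ (fun n (x : X) => (exists y, D y /\ fi y = n) -> D x /\ fi x = n)) => n.
  case: (pselect (exists y, D y /\ fi y = n)) => [[y Hy]|nH]; first by exists y.
  by exists x0 => H; exfalso; apply: nH.
apply: (@abstract_rigid R X G (orbit_set f) h rigX d).
- move=> W oW W0.
  have [y [Wy Dy]] := dD W W0 oW.
  have [Ddn fdn] := dP (fi y) (ex_intro _ y (conj Dy erefl)).
  exists (fi y); suff -> : d (fi y) = y by [].
  by apply: fiI; rewrite ?inE.
- move=> M cM p; have [g Hg] := korf M cM p.
  by exists (gshift f g); split => //; exists g.
- move=> c Ac eps e0; exact: (box_of_within hc Ac e0).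
Qed.
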